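(* Let $\mathfrak{U}$ be a Banach algebra such that $\mathfrak{U}^\sharp$ is symmetrically pseudo-amenable. Let $Y$ be a Banach $\mathfrak{U}$-bimodule and $X$ a closed $\mathfrak{U}$-subbimodule of $Y$. If $\delta:\mathfrak{U}\to Y$ is a bounded derivation and $\tau:\mathfrak{U}\to\mathcal{Z}_{\mathfrak{U}}(Y)$ is a linear map such that $(\delta+\tau)(\mathfrak{U})\subseteq X$, then $\delta(\mathfrak{U})\subseteq X$ and $\tau(\mathfrak{U})\subseteq\mathcal{Z}_{\mathfrak{U}}(X)$.
   Context: $\mathfrak{U}^\sharp=\mathfrak{U}\oplus\mathbb{C}1$ is the unitization of $\mathfrak{U}$ with the $\ell^1$-norm (a unit is adjoined even if $\mathfrak{U}$ is unital). For a bimodule $Y$, $\mathcal{Z}_{\mathfrak{U}}(Y)=\{y\in Y: ay=ya \text{ for all } a\in\mathfrak{U}\}$. A derivation is a linear map with $\delta(ab)=\delta(a)b+a\delta(b)$. For a Banach algebra $\mathfrak{A}$, $\mathfrak{A}\widehat{\otimes}\mathfrak{A}$ is the projective tensor product with $a(b\otimes c)=ab\otimes c$, $(b\otimes c)a=b\otimes ca$, $\pi(b\otimes c)=bc$ (extended linearly and continuously); the flip is $(b\otimes c)^\circ=c\otimes b$ and $\mathbf{t}$ is symmetric if $\mathbf{t}^\circ=\mathbf{t}$. A symmetric approximate diagonal is a net $\{\mathbf{t}_\lambda\}$ (not necessarily bounded) of symmetric elements with $a\mathbf{t}_\lambda-\mathbf{t}_\lambda a\to0$ and $\pi(\mathbf{t}_\lambda)a\to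 a$ for all $a\in\mathfrak{A}$; $\mathfrak{A}$ is symmetrically pseudo-amenable if it has one. *)

(* Defs.v *)
From HB Require Import structures.
From mathcomp Require Import all_boot all_order all_algebra.
From mathcomp Require Import all_classical all_reals all_analysis.
From mathcomp Require Export complex.
Set Implicit Arguments. Unset Strict Implicit. Unset Printing Implicit Defensive.
Import Order.TTheory GRing.Theory Num.Theory.
Local Open Scope ring_scope.

Section Defs.
Variable R : realType.
Local Notation K := (R[i]).

Definition banach_algebra_mul (A : completeNormedModType K) (mul : A -> A -> A)
  : Prop :=
  (forall a b c, mul a (mul b c) = mul (mul a b) c) /\
  (forall a b c, mul (a + b) c = mul a c + mul b c) /\
  (forall a b c, mul a (b + c) = mul a b + mul a c) /\
  (forall (k : K) a b, mul (k *: a) b = k *: mul a b) /\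
  (forall (k : K) a b, mul a (k *: b) = k *: mul a b) /\
  (forall a b, `|mul a b| <= `|a| * `|b|).

Definition banach_bimodule (A : completeNormedModType K) (mul : A -> A -> A)
  (Y : completeNormedModType K) (la : A -> Y -> Y) (ra : Y -> A -> Y) : Prop :=
  (forall (k : K) a b y, la (k *: a + b) y = k *: la a y + la b y) /\
  (forall (k : K) a y z, la a (k *: y + z) = k *: la a y + la a z) /\
  (forall (k : K) a b y, ra y (k *: a + b) = k *: ra y a + ra y b) /\
  (forall (k : K) a y z, ra (k *: y + z) a = k *: ra y a + ra z a) /\
  (forall a b y, la (mul a b) y = la a (la b y)) /\
  (forall a b y, ra y (mul a b) = ra (ra y a) b) /\
  (forall a b y, ra (la a y) b = la a (ra y b)) /\
  (exists C : K, 0 <= C /\ forall a y,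
      `|la a y| <= C * `|a| * `|y| /\ `|ra y a| <= C * `|a| * `|y|).

Definition closed_subbimodule (A : completeNormedModType K)
  (Y : completeNormedModType K) (la : A -> Y -> Y) (ra : Y -> A -> Y)
  (X : set Y) : Prop :=
  [/\ closed X, X 0,
      (forall (k : K) x y, X x -> X y -> X (k *: x + y)),
      (forall a x, X x -> X (la a x)) &
      (forall a x, X x -> X (ra x a))].

Definition centre_in (A : Type) (Y : Type) (la : A -> Y -> Y) (ra : Y -> A -> Y)
  (S : set Y) : set Y :=
  [set y | S y /\ forall a, la a y = ra y a].

Definition is_linear (V W : lmodType K) (f : V -> W) : Prop :=
  forall (k : K) x y, f (k *: x + y) = k *: f x + f y.

Definition is_derivation (A : completeNormedModType K) (mul : A -> A -> A)
  (Y : completeNormedModType K) (la : A -> Y -> Y) (ra : Y -> A -> Y)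
  (d : A -> Y) : Prop :=
  is_linear d /\ forall a b, d (mul a b) = ra (d a) b + la a (d b).

Definition is_bounded (A Y : normedModType K) (f : A -> Y) : Prop :=
  exists M : K, 0 <= M /\ forall a, `|f a| <= M * `|a|.

(* Unitization U# = U (+) C 1 with the l^1 norm.                       *)
Definition unitization_mul (A : completeNormedModType K) (mul : A -> A -> A)
  (x y : A * K) : A * K :=
  (mul x.1 y.1 + x.2 *: y.1 + y.2 *: x.1, x.2 * y.2).

Definition unitization_norm (A : completeNormedModType K) (x : A * K) : K :=
  `|x.1| + `|x.2|.

(* Projective tensor product V (x^) V of a Banach algebra V with norm  *)
(* N.  An element is represented by a sequence (a_n, b_n) with         *)
(* sum_n N a_n * N b_n < oo, standing for sum_n a_n (x) b_n.  The      *)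
(* projective norm of an element u is sup |B(u)| over bounded bilinear *)
(* forms B of norm <= 1 (the dual of V (x^) V), where                  *)
(* B(sum a_n (x) b_n) = sum B(a_n,b_n).                                *)
Variable V : lmodType K.
Variable N : V -> K.
Variable mul : V -> V -> V.

Definition series_to (W : zmodType) (nW : W -> K) (u : nat -> W) (s : W) : Prop :=
  forall e : K, 0 < e -> exists M : nat, forall n : nat, (M <= n)%N ->
    nW (\sum_(i < n) u i - s) < e.

Definition ptensor := nat -> V * V.

Definition ptensor_ok (t : ptensor) : Prop :=
  exists Bd : K, forall n, \sum_(i < n) N (t i).1 * N (t i).2 <= Bd.

Definition bilin_ball (B : V -> V -> K) : Prop :=
  [/\ (forall y, is_linear (fun x : V => (B x y : K^o))),
      (forall x, is_linear (fun y : V => (B x y : K^o))) &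
      (forall x y, `|B x y| <= N x * N y)].

Definition tensor_eval (B : V -> V -> K) (t : ptensor) (s : K) : Prop :=
  series_to (fun z : K => `|z|) (fun n => B (t n).1 (t n).2) s.

Definition ptensor_dist_le (t1 t2 : ptensor) (e : K) : Prop :=
  forall B, bilin_ball B -> exists s1 s2,
    [/\ tensor_eval B t1 s1, tensor_eval B t2 s2 & `|s1 - s2| <= e].

Definition ptensor_flip (t : ptensor) : ptensor := fun n => ((t n).2, (t n).1).

Definition ptensor_symmetric (t : ptensor) : Prop :=
  forall B, bilin_ball B -> exists s, tensor_eval B t s /\ tensor_eval B (ptensor_flip t) s.

Definition ptensor_lmul (a : V) (t : ptensor) : ptensor :=
  fun n => (mul a (t n).1, (t n).2).
Definition ptensor_rmul (t : ptensor) (a : V) : ptensor :=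
  fun n => ((t n).1, mul (t n).2 a).

Definition ptensor_pi (t : ptensor) (p : V) : Prop :=
  series_to N (fun n => mul (t n).1 (t n).2) p.

Definition directed_set (I : Type) (le : I -> I -> Prop) : Prop :=
  [/\ inhabited I, (forall i, le i i),
      (forall i j k, le i j -> le j k -> le i k) &
      (forall i j, exists k, le i k /\ le j k)].

(* V is symmetrically pseudo-amenable: it has a (not necessarily bounded)
   net of symmetric elements t_l of V (x^) V with a t_l - t_l a -> 0 and
   pi(t_l) a -> a for all a. *)
Definition sym_pseudo_amenable : Prop :=
  exists (I : Type) (le : I -> I -> Prop) (t : I -> ptensor),
  [/\ directed_set le,
      (forall i, ptensor_ok (t i) /\ ptensor_symmetric (t i)) &
      (forall (a : V) (e : K), 0 < e -> exists i0, forall i, le i0 i ->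
          ptensor_dist_le (ptensor_lmul a (t i)) (ptensor_rmul (t i) a) e /\
          exists p, ptensor_pi (t i) p /\ N (mul p a - a) <= e)].

End Defs.

(* Main.v *)
Require Import Defs.
From HB Require Import structures.
From mathcomp Require Import all_boot all_order all_algebra.
From mathcomp Require Import all_classical all_reals all_analysis.
From mathcomp Require Import complex.
From mathcomp Require Import ring lra.
Import Order.TTheory GRing.Theory Num.Theory.
Local Open Scope ring_scope.
Local Open Scope classical_set_scope.
Set Implicit Arguments. Unset Strict Implicit. Unset Printing Implicit Defensive.

Section HBreal.
Local Open Scope complex_scope.
Variable R : realType.
Variable V : lmodType R[i].
Variable p : V -> R.
Hypothesis psub : forall x y, p (x + y) <= p x + p y.
Hypothesis phom : forall (t : R) x, 0 <= t -> p (t%:C *: x) = t * p x.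

Definition rsub (W : set V) := W 0 /\ forall (t : R) x y, W x -> W y -> W (t%:C *: x + y).
Definition rlin (W : set V) (g : V -> R) :=
  forall (t : R) x y, W x -> W y -> g (t%:C *: x + y) = t * g x + g y.
Definition rdom (W : set V) (g : V -> R) := forall x, W x -> g x <= p x.

Lemma rsubZ W t x : rsub W -> W x -> W (t%:C *: x).
Proof. by move=> [W0 WD] Wx; have := WD t x 0 Wx W0; rewrite addr0. Qed.
Lemma rsubD W x y : rsub W -> W x -> W y -> W (x + y).
Proof. by move=> [W0 WD] Wx Wy; have := WD 1 x y Wx Wy; rewrite scale1r. Qed.
Lemma rsubN W x : rsub W -> W x -> W (- x).
Proof. by move=> hW Wx; have := rsubZ (-1) hW Wx; rewrite rmorphN1 scaleN1r. Qed.
Lemma rsubB W x y : rsub W -> W x -> W y -> W (x - y).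
Proof. by move=> hW Wx Wy; apply: rsubD => //; apply: rsubN. Qed.

Lemma rlin0 W g : rsub W -> rlin W g -> g 0 = 0.
Proof.
move=> [W0 _] hg; have := hg 1 0 0 W0 W0; rewrite scale1r addr0 mul1r => h.
lra.
Qed.
Lemma rlinD W g x y : rsub W -> rlin W g -> W x -> W y -> g (x + y) = g x + g y.
Proof. by move=> hW hg Wx Wy; have := hg 1 x y Wx Wy; rewrite scale1r mul1r. Qed.
Lemma rlinZ W g t x : rsub W -> rlin W g -> W x -> g (t%:C *: x) = t * g x.
Proof.
move=> hW hg Wx; have := hg t x 0 Wx hW.1; rewrite addr0 (rlin0 hW hg) addr0 //.
Qed.
Lemma rlinN W g x : rsub W -> rlin W g -> W x -> g (- x) = - g x.
Proof.
move=> hW hg Wx; have := rlinZ (-1) hW hg Wx; rewrite rmorphN1 scaleN1r => ->; lra.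
Qed.
Lemma rlinB W g x y : rsub W -> rlin W g -> W x -> W y -> g (x - y) = g x - g y.
Proof.
move=> hW hg Wx Wy; rewrite (rlinD hW hg Wx (rsubN hW Wy)) (rlinN hW hg Wy) //.
Qed.

Lemma scaleCK (t : R) (x : V) : t != 0 -> t%:C *: ((t^-1)%:C *: x) = x.
Proof. by move=> t0; rewrite scalerA -rmorphM mulfV // scale1r. Qed.

Lemma scaleCVK (t : R) (x : V) : t != 0 -> (t^-1)%:C *: (t%:C *: x) = x.
Proof. by move=> t0; rewrite scalerA -rmorphM mulVf // scale1r. Qed.

Definition ext_set (W : set V) (v : V) : set V :=
  [set u | exists w (t : R), W w /\ u = w + t%:C *: v].

Lemma ext_uniq W v w1 w2 (t1 t2 : R) : rsub W -> ~ W v -> W w1 -> W w2 ->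
  w1 + t1%:C *: v = w2 + t2%:C *: v -> t1 = t2 /\ w1 = w2.
Proof.
move=> hW nWv W1 W2 e.
have ht : t1 = t2.
  apply/eqP; apply/negPn/negP => ne; apply: nWv.
  have e2 : (t2 - t1)%:C *: v = w1 - w2.
    rewrite rmorphB scalerBl; apply/eqP.
    by rewrite subr_eq -addrA (addrC (-w2)) addrA e (addrC w2) addrK.
  have ne' : t2 - t1 != 0 by rewrite subr_eq0 eq_sym.
  rewrite -(scaleCVK v ne') e2; apply: rsubZ => //; exact: rsubB.
by split => //; move: e; rewrite ht => /addIr.
Qed.

Lemma ext_rsub W v : rsub W -> rsub (ext_set W v).
Proof.
move=> hW; split; first by exists 0, 0; split; [case: hW | rewrite rmorph0 scale0r addr0].
move=> t _ _ [w1 [t1 [W1 ->]]] [w2 [t2 [W2 ->]]].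
exists (t%:C *: w1 + w2), (t * t1 + t2); split; first by case: hW => _; apply.
by rewrite rmorphD rmorphM scalerDr scalerDl scalerA; rewrite addrACA.
Qed.

Lemma extend W g v : rsub W -> rlin W g -> rdom W g -> ~ W v ->
  exists (c : R) (g' : V -> R),
  [/\ rlin (ext_set W v) g',
      (forall w (t : R), W w -> g' (w + t%:C *: v) = g w + t * c),
      rdom (ext_set W v) g' &
      (forall b, (forall w, W w -> g w - p (w - v) <= b) -> c <= b)].
Proof.
move=> hW hg hd nWv.
have key : forall w1 w2, W w1 -> W w2 -> g w1 - p (w1 - v) <= p (w2 + v) - g w2.
  move=> w1 w2 W1 W2; have h1 := rlinD hW hg W1 W2.
  have h2 := hd _ (rsubD hW W1 W2).
  have h3 : p (w1 + w2) <= p (w1 - v) + p (w2 + v).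
    by rewrite -[in X in p X <= _](subrK v w1) -addrA [v + _]addrC psub.
  lra.
pose S := [set x | exists2 w, W w & x = g w - p (w - v)].
have S0 : S !=set0 by exists (g 0 - p (0 - v)); exists 0 => //; case: hW.
have hS : has_sup S.
  split => //; exists (p (0 + v) - g 0) => x [w Ww ->]; apply: key => //; by case: hW.
pose c := sup S.
have cub : forall w, W w -> g w - p (w - v) <= c.
  by move=> z Wz; apply: (sup_upper_bound hS); exists z.
have clb : forall w, W w -> c <= p (w + v) - g w.
  by move=> w Ww; apply: ge_sup => // x [w' W' ->]; apply: key.
pose g' (u : V) := if pselect (exists wt : V * R, W wt.1 /\ u = wt.1 + wt.2%:C *: v)
  is left h then let wt := projT1 (cid h) in g wt.1 + wt.2 * c else 0.
have g'E : forall w (t : R), W w -> g' (w + t%:C *: v) = g w + t * c.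
  move=> w t Ww; rewrite /g'; case: pselect => [h|nh]; last first.
    by exfalso; apply: nh; exists (w, t).
  case: (cid h) => [[w' t'] [/= W' e]] /=.
  by have [-> ->] := ext_uniq hW nWv Ww W' e.
exists c, g'; split => //.
- move=> s _ _ [w1 [t1 [W1 ->]]] [w2 [t2 [W2 ->]]].
  have -> : s%:C *: (w1 + t1%:C *: v) + (w2 + t2%:C *: v) =
    (s%:C *: w1 + w2) + (s * t1 + t2)%:C *: v.
    by rewrite rmorphD rmorphM scalerDr scalerDl scalerA; rewrite addrACA.
  rewrite !g'E //; last by case: hW => _; apply.
  rewrite (hg _ _ _ W1 W2); ring.
- move=> _ [w [t [Ww ->]]]; rewrite g'E //.
  have [->|tn0'] := eqVneq t 0.
    by rewrite rmorph0 scale0r addr0 mul0r addr0; exact: hd.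
  have [t0|t0] := boolP (0 < t).
  + have tn0 : t != 0 by rewrite gt_eqF.
    pose w' := (t^-1)%:C *: w; have Ww' : W w' by apply: rsubZ.
    have e : w + t%:C *: v = t%:C *: (w' + v) by rewrite scalerDr scaleCK.
    have gw : g w = t * g w' by rewrite /w' (rlinZ _ hW hg Ww) mulrA mulfV // mul1r.
    rewrite e phom; last exact: ltW.
    rewrite gw -mulrDr ler_pM2l //.
    have := clb w' Ww'; lra.
  + have t0' : t < 0 by rewrite lt_neqAle tn0' /=; rewrite real_leNgt ?num_real.
    pose s := - t; have s0 : 0 < s by rewrite /s oppr_gt0.
    have sn0 : s != 0 by rewrite gt_eqF.
    pose w' := (s^-1)%:C *: w; have Ww' : W w' by apply: rsubZ.
    have e : w + t%:C *: v = s%:C *: (w' - v).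
      by rewrite scalerBr scaleCK // /s rmorphN scaleNr opprK.
    have gw : g w = s * g w' by rewrite /w' (rlinZ _ hW hg Ww) mulrA mulfV // mul1r.
    rewrite e phom; last exact: ltW.
    rewrite gw.
    have ht : t = - s by rewrite /s opprK.
    have h := cub w' Ww'; clearbody s; subst t; nra.
- by move=> b hb; apply: ge_sup => // x [w Ww ->]; apply: hb.
Qed.

Section Zorn.
Variables (W0 : set V) (f0 : V -> R).
Hypotheses (hW0 : rsub W0) (hf0 : rlin W0 f0) (hd0 : rdom W0 f0).

Record pext := PExt { pW : set V; pg : V -> R; pWs : rsub pW; pgl : rlin pW pg;
  pgd : rdom pW pg; pW0 : W0 `<=` pW; pg0 : forall x, W0 x -> pg x = f0 x }.

Definition ple (s t : pext) : bool :=
  `[< pW s `<=` pW t /\ forall x, pW s x -> pg t x = pg s x >].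

Lemma HB_real : exists g : V -> R,
  [/\ rlin setT g, (forall x, W0 x -> g x = f0 x) & rdom setT g].
Proof.
pose t0 := PExt hW0 hf0 hd0 (@subset_refl _ W0) (fun x _ => erefl).
have [|||t tmax] := @ZL_preorder pext t0 ple.
- by move=> s; apply/asboolP; split.
- move=> r s t /asboolP [h1 h2] /asboolP [h3 h4]; apply/asboolP; split.
    by move=> x /h1 /h3.
  by move=> x rx; rewrite h4 ?h2 //; apply: h1.
- move=> A Atot.
  have [[s0 As0]|A0] := pselect (exists s, A s); last first.
    by exists t0 => s As; exfalso; apply: A0; exists s.
  pose W := [set x | exists s, A s /\ pW s x].
  pose g (x : V) := if pselect (exists s, A s /\ pW s x) is left h
    then pg (projT1 (cid h)) x else 0.
  have gE : forall s x, A s -> pW s x -> g x = pg s x.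
    move=> s x As sx; rewrite /g; case: pselect => [h|nh]; last by exfalso; apply: nh; exists s.
    case: (cid h) => s' [As' s'x] /=.
    have [/asboolP [h1 h2]|/asboolP [h1 h2]] := Atot _ _ As As'.
      by rewrite h2.
    by rewrite h2.
  have common : forall s1 s2 x y, A s1 -> A s2 -> pW s1 x -> pW s2 y ->
      exists s, [/\ A s, pW s x & pW s y].
    move=> s1 s2 x y A1 A2 h1 h2.
    have [/asboolP [h3 _]|/asboolP [h3 _]] := Atot _ _ A1 A2.
      by exists s2; split => //; apply: h3.
    by exists s1; split => //; apply: h3.
  have Ws : rsub W.
    split; first by exists s0; split => //; case: (pWs s0).
    move=> t x y [s1 [A1 h1]] [s2 [A2 h2]].
    have [s [As sx sy]] := common _ _ _ _ A1 A2 h1 h2.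
    by exists s; split => //; case: (pWs s) => _; apply.
  have gl : rlin W g.
    move=> t x y [s1 [A1 h1]] [s2 [A2 h2]].
    have [s [As sx sy]] := common _ _ _ _ A1 A2 h1 h2.
    have sxy : pW s (t%:C *: x + y) by case: (pWs s) => _; apply.
    by rewrite !(gE s) // (@pgl s t x y sx sy).
  have gd : rdom W g by move=> x [s [As sx]]; rewrite (gE s) //; apply: pgd.
  have gW0 : W0 `<=` W by move=> x W0x; exists s0; split => //; apply: pW0.
  have g0 : forall x, W0 x -> g x = f0 x.
    by move=> x W0x; rewrite (gE s0) //; [apply: pg0 | apply: pW0].
  exists (PExt Ws gl gd gW0 g0) => s As; apply/asboolP; split => /=.
    by move=> x sx; exists s.
  by move=> x sx; apply: gE.
have allW : forall v, pW t v.
  move=> v; apply: contrapT => nv.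
  have [c [g' [g'l g'E g'd _]]] := extend (pWs t) (@pgl t) (@pgd t) nv.
  have W0e : W0 `<=` ext_set (pW t) v.
    move=> x W0x; exists x, 0; split; first by apply: pW0.
    by rewrite rmorph0 scale0r addr0.
  have e0 : forall x, pW t x -> g' x = pg t x.
    by move=> x tx; have := g'E x 0 tx; rewrite rmorph0 scale0r addr0 mul0r addr0 => ->.
  have g'0 : forall x, W0 x -> g' x = f0 x.
    by move=> x W0x; rewrite e0 ?pg0 //; apply: pW0.
  pose t' := PExt (ext_rsub v (pWs t)) g'l g'd W0e g'0.
  have : ple t t'.
    apply/asboolP; split => /=; last exact: e0.
    move=> x tx; exists x, 0; split => //; by rewrite rmorph0 scale0r addr0.
  move=> /tmax /asboolP [/= h _]; apply: nv; apply: h.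
  by exists 0, 1; split; [case: (pWs t) | rewrite scale1r add0r].
exists (pg t); split.
- by move=> r x y _ _; apply: pgl.
- exact: pg0.
- by move=> x _; apply: pgd.
Qed.
End Zorn.

End HBreal.

Section Sep.
Local Open Scope complex_scope.
Local Notation Re := complex.Re.
Local Notation Im := complex.Im.
Variable R : realType.
Variable Y : normedModType R[i].

Lemma far (X : set Y) y0 : closed X -> ~ X y0 ->
  exists2 e : R[i], 0 < e & forall x, X x -> e <= `|y0 - x|.
Proof.
move=> cX nX; apply: contrapT => H; apply: nX; apply: cX => B /nbhs_ballP [e e0 hB].
have : ~ (forall x, X x -> e <= `|y0 - x|) by move=> h; apply: H; exists e.
move=> /existsNP [x /not_implyP [Xx /negP hx]].
exists x; split => //; apply: hB; rewrite -ball_normE /ball_ /=.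
by rewrite real_ltNge ?hx ?normr_real ?gtr0_real.
Qed.

Lemma ReD (a b : R[i]) : Re (a + b) = Re a + Re b.
Proof. by case: a => a1 a2; case: b => b1 b2. Qed.
Lemma ReRM (t : R) (z : R[i]) : Re (t%:C * z) = t * Re z.
Proof. by case: z => a b /=; rewrite mul0r subr0. Qed.
Lemma Re_le (a b : R[i]) : a <= b -> Re a <= Re b.
Proof. by rewrite lecE => /andP []. Qed.
Lemma le_Re (a b : R[i]) : 0 <= a -> 0 <= b -> Re a <= Re b -> a <= b.
Proof.
move=> a0 b0 h; rewrite lecE h andbT (ger0_Im a0) (ger0_Im b0) //.
Qed.
Lemma Re_phi (s1 s2 : R) : Re (s1%:C - 'i%C * s2%:C) = s1.
Proof. by rewrite /= mul0r mul1r subr0 subr0. Qed.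

Lemma ring_mod (I L Rt Q : R[i]) : I ^+ 2 = -1 -> L = Rt + Q * (I ^+ 2 + 1) -> L = Rt.
Proof. by move=> hI ->; rewrite hI addNr mulr0 addr0. Qed.

Lemma separation (X : set Y) y0 : closed X -> X 0 ->
  (forall (k : R[i]) x y, X x -> X y -> X (k *: x + y)) -> ~ X y0 ->
  exists phi : Y -> R[i],
  [/\ (forall k x y, phi (k *: x + y) = k * phi x + phi y),
      (forall y, `|phi y| <= `|y|), (forall x, X x -> phi x = 0) & phi y0 != 0].
Proof.
move=> cX X0 Xl nX.
have [e e0 he] := far cX nX.
pose p (y : Y) := Re `|y|.
have psub : forall x y, p (x + y) <= p x + p y.
  by move=> x y; rewrite /p -ReD; apply: Re_le; apply: ler_normD.
have phom : forall (t : R) x, 0 <= t -> p (t%:C *: x) = t * p x.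
  by move=> t x t0; rewrite /p normrZ ger0_norm ?ler0c // ReRM.
have hX : rsub X := conj X0 (fun t x y => Xl t%:C x y).
have l0 : rlin X (fun _ => 0 : R) by move=> *; rewrite mulr0 addr0.
have d0 : rdom p X (fun _ => 0) by move=> x _; exact: (Re_le (normr_ge0 x)).
have [c [g1 [g1l g1E g1d cle]]] := extend psub phom hX l0 d0 nX.
have hr : 0 < Re e by move: e0; rewrite ltcE => /andP [].
have cneg : c <= - Re e.
  apply: cle => w Xw; rewrite sub0r lerN2 /p; apply: Re_le.
  by rewrite distrC; apply: he.
have W1s := ext_rsub y0 hX.
have [g [gl gW1 gd]] := HB_real psub phom W1s g1l g1d.
have gX : forall x, X x -> g x = 0.
  move=> x Xx; rewrite gW1; last by exists x, 0; split => //; rewrite rmorph0 scale0r addr0.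
  by have := g1E x 0 Xx; rewrite rmorph0 scale0r addr0 => ->; rewrite mul0r addr0.
have gy0 : g y0 = c.
  rewrite gW1; last by exists 0, 1; split => //; rewrite rmorph1 scale1r add0r.
  by have := g1E 0 1 X0; rewrite rmorph1 scale1r add0r => ->; rewrite mul1r add0r.
have sT : rsub (@setT Y) by [].
have gD : forall x y, g (x + y) = g x + g y by move=> x y; apply: (rlinD sT gl).
have gZ : forall (t : R) x, g (t%:C *: x) = t * g x by move=> t x; apply: (rlinZ _ sT gl).
have g0 : g 0 = 0 by apply: (rlin0 sT gl).
pose phi y := (g y)%:C - 'i%C * (g ('i%C *: y))%:C.
have phiRe : forall y, Re (phi y) = g y by move=> y; apply: Re_phi.
have phi0 : phi 0 = 0 by rewrite /phi scaler0 g0 rmorph0 mulr0 subr0.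
have phil : forall k x y, phi (k *: x + y) = k * phi x + phi y.
  move=> k x y; rewrite /phi.
  have ek := complexE k; set a := Re k in ek; set b := Im k in ek.
  have e1 : k *: x + y = a%:C *: x + (b%:C *: ('i%C *: x) + y).
    by rewrite addrA scalerA (mulrC b%:C) -scalerDl -ek.
  have hk : 'i%C * k = a%:C * 'i%C + (-b)%:C.
    by rewrite {1}ek mulrDr mulrA -expr2 sqr_i rmorphN mulN1r mulrC.
  have e2 : 'i%C *: (k *: x + y) = a%:C *: ('i%C *: x) + ((-b)%:C *: x + 'i%C *: y).
    by rewrite scalerDr (scalerA 'i%C k) hk scalerDl [in RHS]scalerA addrA.
  rewrite e2 e1 !gD !gZ ek.
  apply: (ring_mod (I := 'i%C) (Q := b%:C * (g ('i%C *: x))%:C) (sqr_i R)).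
  clearbody a b; ring.
exists phi; split => //.
- move=> y; have [->|z0] := eqVneq (phi y) 0; first by rewrite normr0 normr_ge0.
  set z := phi y in z0 *.
  pose u := `|z| / z.
  have uz : u * z = `|z| by rewrite /u mulfVK.
  have nu : `|u| = 1 by rewrite /u normf_div normr_id divff // normr_eq0.
  have phiZ : phi (u *: y) = `|z|.
    by rewrite -[u *: y]addr0 phil phi0 addr0 uz.
  have h1 := gd (u *: y) I.
  rewrite -phiRe phiZ /p normrZ nu mul1r in h1.
  by apply: le_Re => //; apply: normr_ge0.
- move=> x Xx; rewrite /phi gX // gX; first by rewrite rmorph0 mulr0 subr0.
  by rewrite -[_ *: x]addr0; apply: Xl.
- apply/eqP => h; have := phiRe y0; rewrite h gy0 /= => c0.
  move: cneg; rewrite -c0; lra.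
Qed.

End Sep.

Section Lin.
Variable R : realType.
Local Notation K := R[i].
Variables (U W : lmodType K) (f : U -> W).
Hypothesis hf : forall (k : K) x y, f (k *: x + y) = k *: f x + f y.
Lemma lin0 : f 0 = 0.
Proof.
have := hf 1 0 0; rewrite !scale1r addr0 => h.
by apply: (@addrI _ (f 0)); rewrite addr0 -h.
Qed.
Lemma linD x y : f (x + y) = f x + f y.
Proof. by have := hf 1 x y; rewrite !scale1r. Qed.
Lemma linZ k x : f (k *: x) = k *: f x.
Proof. by have := hf k x 0; rewrite !addr0 lin0 addr0. Qed.
Lemma linN x : f (- x) = - f x.
Proof. by rewrite -scaleN1r linZ scaleN1r. Qed.
Lemma linB x y : f (x - y) = f x - f y.
Proof. by rewrite linD linN. Qed.
Lemma linsum n (F : nat -> U) : f (\sum_(i < n) F i) = \sum_(i < n) f (F i).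
Proof.
elim: n => [|n IH]; first by rewrite !big_ord0 lin0.
by rewrite !big_ord_recr /= linD IH.
Qed.
End Lin.

Section T.
Variable R : realType.
Local Notation K := R[i].
Variable A : completeNormedModType K.
Lemma fstZ (k : K) (u : A * K) : (k *: u).1 = k *: u.1. Proof. by []. Qed.
Lemma sndZ (k : K) (u : A * K) : (k *: u).2 = k * u.2. Proof. by []. Qed.
Lemma fstD (u v : A * K) : (u + v).1 = u.1 + v.1. Proof. by []. Qed.
Lemma sndD (u v : A * K) : (u + v).2 = u.2 + v.2. Proof. by []. Qed.
Lemma fstN (u : A * K) : (- u).1 = - u.1. Proof. by []. Qed.
Lemma sndN (u : A * K) : (- u).2 = - u.2. Proof. by []. Qed.
End T.

Section Ser.
Variable R : realType.
Local Notation K := R[i].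
Local Notation nK := (fun z : K => `|z|).

Lemma C1gt0 (C : K) : 0 <= C -> 0 < C + 1.
Proof. by move=> C0; apply: ltr_wpDl. Qed.

Lemma small0 (z C : K) : 0 <= C -> (forall e : K, 0 < e -> `|z| <= C * e) -> z = 0.
Proof.
move=> C0 H; apply/normr0_eq0/eqP; rewrite eq_le normr_ge0 andbT.
apply/ler_addgt0Pr => e e0; rewrite add0r.
have C1 := C1gt0 C0.
apply: (le_trans (H _ (divr_gt0 e0 C1))).
rewrite mulrA ler_pdivrMr // mulrDr mulr1 mulrC lerDl; exact: ltW.
Qed.

Lemma ser_uniq (u : nat -> K) s s' : series_to nK u s -> series_to nK u s' -> s = s'.
Proof.
move=> h1 h2; apply/eqP; rewrite -subr_eq0; apply/eqP.
apply: (@small0 _ 2) => // e e0.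
have [M1 hM1] := h1 e e0; have [M2 hM2] := h2 e e0.
have h1' := hM1 (maxn M1 M2) (leq_maxl _ _).
have h2' := hM2 (maxn M1 M2) (leq_maxr _ _).
set S := \sum_(i < maxn M1 M2) u i in h1' h2'.
have -> : s - s' = (S - s') - (S - s) by ring.
apply: (le_trans (ler_normB _ _)); rewrite mulr2n mulrDl mul1r.
by apply: lerD; apply: ltW.
Qed.

Lemma ser_ext (u v : nat -> K) s : (forall n, u n = v n) -> series_to nK u s -> series_to nK v s.
Proof.
move=> huv h e e0; have [M hM] := h e e0; exists M => n hn.
rewrite (eq_bigr (fun i : 'I_n => u i)); [exact: hM | by move=> i _; rewrite huv].
Qed.

Lemma ser_add (u v : nat -> K) s s' : series_to nK u s -> series_to nK v s' ->
  series_to nK (fun n => u n + v n) (s + s').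
Proof.
move=> h1 h2 e e0.
have e2 : 0 < e / 2 by rewrite divr_gt0.
have [M1 hM1] := h1 _ e2; have [M2 hM2] := h2 _ e2.
exists (maxn M1 M2) => n hn.
rewrite big_split /= opprD addrACA.
apply: (le_lt_trans (ler_normD _ _)).
rewrite (splitr e); apply: ltrD.
  by apply: hM1; apply: leq_trans hn; apply: leq_maxl.
by apply: hM2; apply: leq_trans hn; apply: leq_maxr.
Qed.

Lemma ser_scale (u : nat -> K) s (k : K) : series_to nK u s ->
  series_to nK (fun n => k * u n) (k * s).
Proof.
move=> h e e0.
have k1 : 0 < `|k| + 1 by apply: C1gt0.
have [M hM] := h _ (divr_gt0 e0 k1).
exists M => n hn.
rewrite -mulr_sumr -mulrBr normrM.
have h1 := hM n hn.
have : `|k| * `|\sum_(i < n) u i - s| <= `|k| * (e / (`|k| + 1)).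
  by apply: ler_wpM2l => //; apply: ltW.
move=> /le_lt_trans; apply.
rewrite mulrA ltr_pdivrMr // mulrDr mulr1 mulrC ltrDl //.
Qed.

Lemma ser_map (V : lmodType K) (N : V -> K) (f : V -> K) (Mf : K) (w : nat -> V) P :
  (forall (k : K) x y, f (k *: x + y) = k * f x + f y) -> 0 <= Mf ->
  (forall x, `|f x| <= Mf * N x) ->
  series_to N w P -> series_to nK (fun n => f (w n)) (f P).
Proof.
move=> fl Mf0 fb h e e0.
have k1 := C1gt0 Mf0.
have [M hM] := h _ (divr_gt0 e0 k1).
exists M => n hn.
have fl' : forall (k : K) x y, (f : V -> K^o) (k *: x + y) = k *: (f : V -> K^o) x + f y by [].
rewrite -(linsum fl') -(linB fl').
apply: (le_lt_trans (fb _)).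
have := hM n hn => h1.
have : Mf * N (\sum_(i < n) w i - P) <= Mf * (e / (Mf + 1)).
  by apply: ler_wpM2l => //; apply: ltW.
move=> /le_lt_trans; apply.
rewrite mulrA ltr_pdivrMr // mulrDr mulr1 mulrC ltrDl //.
Qed.

End Ser.

Section Main.
Variable R : realType.
Local Notation K := R[i].
Local Notation nK := (fun z : K => `|z|).
Variables (A : completeNormedModType K) (mul : A -> A -> A).
Variables (Y : completeNormedModType K) (la : A -> Y -> Y) (ra : Y -> A -> Y).
Variables (X : set Y) (d tau : A -> Y).
Hypothesis mulDr : forall a b c, mul a (b + c) = mul a b + mul a c.
Hypothesis laL : forall (k : K) a b y, la (k *: a + b) y = k *: la a y + la b y.
Hypothesis laR : forall (k : K) a y z, la a (k *: y + z) = k *: la a y + la a z.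
Hypothesis raL : forall (k : K) a b y, ra y (k *: a + b) = k *: ra y a + ra y b.
Hypothesis raR : forall (k : K) a y z, ra (k *: y + z) a = k *: ra y a + ra z a.
Hypothesis laM : forall a b y, la (mul a b) y = la a (la b y).
Hypothesis laRa : forall a b y, ra (la a y) b = la a (ra y b).
Variable C : K.
Hypothesis C0 : 0 <= C.
Hypothesis Cb : forall a y, `|la a y| <= C * `|a| * `|y| /\ `|ra y a| <= C * `|a| * `|y|.
Hypothesis Xsub : forall (k : K) x y, X x -> X y -> X (k *: x + y).
Hypothesis X0 : X 0.
Hypothesis Xla : forall a x, X x -> X (la a x).
Hypothesis Xra : forall a x, X x -> X (ra x a).
Hypothesis dL : forall (k : K) x y, d (k *: x + y) = k *: d x + d y.
Hypothesis dD : forall a b, d (mul a b) = ra (d a) b + la a (d b).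
Variable M : K.
Hypothesis M0 : 0 <= M.
Hypothesis Mb : forall a, `|d a| <= M * `|a|.
Hypothesis tauC : forall a b, la b (tau a) = ra (tau a) b.
Hypothesis hX : forall a, X (d a + tau a).

Lemma laD1 a b y : la (a + b) y = la a y + la b y.
Proof. exact: (linD (f := fun a => la a y) (fun k a b => laL k a b y)). Qed.
Lemma laZ1 k a y : la (k *: a) y = k *: la a y.
Proof. exact: (linZ (f := fun a => la a y) (fun k a b => laL k a b y)). Qed.
Lemma la01 y : la 0 y = 0.
Proof. exact: (lin0 (f := fun a => la a y) (fun k a b => laL k a b y)). Qed.
Lemma laD2 a y z : la a (y + z) = la a y + la a z.
Proof. exact: (linD (fun k y z => laR k a y z)). Qed.
Lemma laZ2 k a y : la a (k *: y) = k *: la a y.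
Proof. exact: (linZ (fun k y z => laR k a y z)). Qed.
Lemma laB2 a y z : la a (y - z) = la a y - la a z.
Proof. exact: (linB (fun k y z => laR k a y z)). Qed.
Lemma raD1 a b y : ra y (a + b) = ra y a + ra y b.
Proof. exact: (linD (f := fun a => ra y a) (fun k a b => raL k a b y)). Qed.
Lemma raZ1 k a y : ra y (k *: a) = k *: ra y a.
Proof. exact: (linZ (f := fun a => ra y a) (fun k a b => raL k a b y)). Qed.
Lemma raD2 a y z : ra (y + z) a = ra y a + ra z a.
Proof. exact: (linD (f := fun y => ra y a) (fun k y z => raR k a y z)). Qed.
Lemma raZ2 k a y : ra (k *: y) a = k *: ra y a.
Proof. exact: (linZ (f := fun y => ra y a) (fun k y z => raR k a y z)). Qed.
Lemma raB2 a y z : ra (y - z) a = ra y a - ra z a.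
Proof. exact: (linB (f := fun y => ra y a) (fun k y z => raR k a y z)). Qed.
Lemma dD1 a b : d (a + b) = d a + d b.
Proof. exact: (linD dL). Qed.
Lemma dZ1 k a : d (k *: a) = k *: d a.
Proof. exact: (linZ dL). Qed.

Local Notation V := (A * K)%type.
Local Notation N := (@unitization_norm R A).
Local Notation mulU := (unitization_mul mul).
Definition one : V := (0, 1).
Definition L (u : V) (y : Y) : Y := la u.1 y + u.2 *: y.
Definition Rr (y : Y) (u : V) : Y := ra y u.1 + u.2 *: y.
Definition D (u : V) : Y := d u.1.
Definition C1 := C + 1.

Lemma C1_gt0 : 0 < C1. Proof. exact: C1gt0. Qed.
Lemma C1_ge0 : 0 <= C1. Proof. exact: ltW C1_gt0. Qed.

Lemma N_ge0 u : 0 <= N u.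
Proof. by rewrite /unitization_norm addr_ge0. Qed.


Lemma LL y : forall (k : K) u v, L (k *: u + v) y = k *: L u y + L v y.
Proof.
move=> k u v; rewrite /L /= laL scalerDl scalerDr -scalerA.
by rewrite -!addrA; congr (_ + _); rewrite addrCA.
Qed.

Lemma LR u : forall (k : K) y z, L u (k *: y + z) = k *: L u y + L u z.
Proof.
move=> k y z; rewrite /L laR scalerDr !scalerA mulrC -!scalerA scalerDr.
by rewrite -!addrA; congr (_ + _); rewrite addrCA.
Qed.

Lemma RrL y : forall (k : K) u v, Rr y (k *: u + v) = k *: Rr y u + Rr y v.
Proof.
move=> k u v; rewrite /Rr /= raL scalerDl scalerDr -scalerA.
by rewrite -!addrA; congr (_ + _); rewrite addrCA.
Qed.

Lemma RrR u : forall (k : K) y z, Rr (k *: y + z) u = k *: Rr y u + Rr z u.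
Proof.
move=> k y z; rewrite /Rr raR scalerDr !scalerA mulrC -!scalerA scalerDr.
by rewrite -!addrA; congr (_ + _); rewrite addrCA.
Qed.

Lemma DL : forall (k : K) u v, D (k *: u + v) = k *: D u + D v.
Proof. by move=> k u v; rewrite /D /= dL. Qed.

Lemma aux_le (c a b y : K) : 0 <= c -> 0 <= a -> 0 <= b -> 0 <= y ->
  c * a * y + b * y <= (c + 1) * (a + b) * y.
Proof.
move=> c0 a0 b0 y0; rewrite -subr_ge0.
have -> : (c + 1) * (a + b) * y - (c * a * y + b * y) = c * b * y + a * y by ring.
by apply: addr_ge0; apply: mulr_ge0 => //; apply: mulr_ge0.
Qed.

Lemma L_bound u y : `|L u y| <= C1 * N u * `|y|.
Proof.
rewrite /L /unitization_norm /C1.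
apply: (le_trans (ler_normD _ _)); rewrite normrZ.
have [h _] := Cb u.1 y.
apply: le_trans (aux_le C0 (normr_ge0 _) (normr_ge0 _) (normr_ge0 _)).
by apply: lerD.
Qed.

Lemma Rr_bound u y : `|Rr y u| <= C1 * N u * `|y|.
Proof.
rewrite /Rr /unitization_norm /C1.
apply: (le_trans (ler_normD _ _)); rewrite normrZ.
have [_ h] := Cb u.1 y.
apply: le_trans (aux_le C0 (normr_ge0 _) (normr_ge0 _) (normr_ge0 _)).
by apply: lerD.
Qed.

Lemma D_bound u : `|D u| <= M * N u.
Proof.
rewrite /D /unitization_norm; apply: (le_trans (Mb _)).
by apply: ler_wpM2l => //; rewrite lerDl.
Qed.

Lemma mul0r_A a : mul a 0 = 0.
Proof.
have := mulDr a 0 0; rewrite addr0 => h.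
by apply: (@addrI _ (mul a 0)); rewrite addr0 -h.
Qed.

Lemma mulU_one p : mulU p one = p.
Proof.
case: p => a l; rewrite /unitization_mul /one /= mul0r_A scaler0 add0r scale1r mulr1.
by rewrite add0r.
Qed.

Lemma L_one y : L one y = y.
Proof.
rewrite /L /one /=.
have := laL 1 0 0 y; rewrite !scale1r addr0 => h.
have -> : la 0 y = 0 by apply: (@addrI _ (la 0 y)); rewrite addr0 -h.
by rewrite add0r.
Qed.

Lemma D_one : D one = 0.
Proof. by rewrite /D /one /= (lin0 dL). Qed.

Lemma L_mul u v y : L (mulU u v) y = L u (L v y).
Proof.
case: u => a l; case: v => b m; rewrite /L /unitization_mul /=.
rewrite !laD1 !laZ1 laM.
rewrite laD2 laZ2 scalerDr !scalerA -!addrA; congr (_ + _).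
rewrite addrCA; congr (_ + _); rewrite addrCA; congr (_ + _).
Qed.

Lemma D_mul u v : D (mulU u v) = Rr (D u) v + L u (D v).
Proof.
case: u => a l; case: v => b m; rewrite /D /Rr /L /unitization_mul /=.
rewrite !dD1 !dZ1 dD -!addrA; congr (_ + _).
by rewrite [RHS]addrCA [m *: _ + _]addrC.
Qed.

Lemma L_Rr x z u : L x (Rr z u) = Rr (L x z) u.
Proof.
case: x => a l; case: u => c m; rewrite /L /Rr /=.
rewrite laD2 laZ2 raD2 raZ2 laRa !scalerDr !scalerA mulrC.
rewrite -!addrA; congr (_ + _); rewrite addrCA; congr (_ + _); exact: addrC.
Qed.

Lemma XB x y : X x -> X y -> X (x - y).
Proof. by move=> Xx Xy; rewrite addrC -scaleN1r; apply: Xsub. Qed.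
Lemma XD x y : X x -> X y -> X (x + y).
Proof. by move=> Xx Xy; rewrite -[x]scale1r; apply: Xsub. Qed.
Lemma XZ k x : X x -> X (k *: x).
Proof. by move=> Xx; rewrite -[_ *: _]addr0; apply: Xsub. Qed.

Lemma XL u x : X x -> X (L u x).
Proof. by move=> Xx; rewrite /L addrC; apply: Xsub => //; apply: Xla. Qed.
Lemma XRr u x : X x -> X (Rr x u).
Proof. by move=> Xx; rewrite /Rr addrC; apply: Xsub => //; apply: Xra. Qed.

Lemma X_comm u v : X (Rr (D u) v - L v (D u)).
Proof.
case: u => a l; case: v => b m; rewrite /D /Rr /L /=.
have -> : ra (d a) b + m *: d a - (la b (d a) + m *: d a) = ra (d a) b - la b (d a).
  by rewrite opprD addrACA subrr addr0.
have -> : ra (d a) b - la b (d a) =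
  (ra (d a + tau a) b - la b (d a + tau a)) - (ra (tau a) b - la b (tau a)).
  rewrite raD2 laD2 tauC; set p := ra (d a) b; set q := ra (tau a) b; set r := la b (d a).
  by rewrite subrr subr0 opprD addrACA subrr addr0.
by rewrite tauC subrr subr0; apply: XB; [apply: Xra | apply: Xla].
Qed.

Definition slin (U : lmodType K) (f : U -> K) :=
  forall (k : K) x y, f (k *: x + y) = k * f x + f y.

Lemma sD (U : lmodType K) (f : U -> K) x y : slin f -> f (x + y) = f x + f y.
Proof. by move=> hf; exact: (linD (f := (f : U -> K^o)) hf). Qed.
Lemma sZ (U : lmodType K) (f : U -> K) k x : slin f -> f (k *: x) = k * f x.
Proof. by move=> hf; exact: (linZ (f := (f : U -> K^o)) hf). Qed.
Lemma sB (U : lmodType K) (f : U -> K) x y : slin f -> f (x - y) = f x - f y.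
Proof. by move=> hf; exact: (linB (f := (f : U -> K^o)) hf). Qed.
Lemma s0 (U : lmodType K) (f : U -> K) : slin f -> f 0 = 0.
Proof. by move=> hf; exact: (lin0 (f := (f : U -> K^o)) hf). Qed.

Lemma psi_comm (psi : Y -> K) u v : slin psi -> (forall x, X x -> psi x = 0) ->
  psi (Rr (D u) v) = psi (L v (D u)).
Proof.
move=> hl h0; apply/eqP; rewrite -subr_eq0 -sB //; apply/eqP; apply: h0.
exact: X_comm.
Qed.

Lemma Kb_gt0 (Mp : K) : 0 <= Mp -> 0 < Mp * C1 * M + 1.
Proof.
move=> Mp0; apply: C1gt0; apply: mulr_ge0 => //; apply: mulr_ge0 => //; exact: C1_ge0.
Qed.

Lemma psiLD_bound (psi : Y -> K) (Mp : K) x y : 0 <= Mp ->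
  (forall y, `|psi y| <= Mp * `|y|) ->
  `|psi (L x (D y))| <= (Mp * C1 * M) * (N x * N y).
Proof.
move=> Mp0 hb; apply: (le_trans (hb _)).
have h1 := L_bound x (D y); have h2 := D_bound y.
have h3 : C1 * N x * `|D y| <= C1 * N x * (M * N y).
  by apply: ler_wpM2l => //; apply: mulr_ge0; [exact: C1_ge0 | exact: N_ge0].
have : Mp * `|L x (D y)| <= Mp * (C1 * N x * (M * N y)).
  by apply: ler_wpM2l => //; apply: le_trans h3.
move=> /le_trans; apply; rewrite le_eqVlt; apply/orP; left; apply/eqP; ring.
Qed.

Definition Bf (psi : Y -> K) (Kb : K) (x y : V) : K := psi (L x (D y)) / Kb.

Lemma Bf_ball (psi : Y -> K) (Mp : K) : slin psi -> 0 <= Mp ->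
  (forall y, `|psi y| <= Mp * `|y|) ->
  bilin_ball N (Bf psi (Mp * C1 * M + 1)).
Proof.
move=> hl Mp0 hb; have Kb0 := Kb_gt0 Mp0; set Kb := Mp * C1 * M + 1 in Kb0 *.
split.
- move=> y k x x'; rewrite /Bf LL hl.
  by rewrite /GRing.scale /= mulrDl mulrA.
- move=> x k y y'; rewrite /Bf DL LR hl.
  by rewrite /GRing.scale /= mulrDl mulrA.
- move=> x y; rewrite /Bf normrM normfV (gtr0_norm Kb0) ler_pdivrMr //.
  apply: (le_trans (psiLD_bound x y Mp0 hb)).
  rewrite mulrC ler_wpM2l //; first by apply: mulr_ge0; exact: N_ge0.
  by rewrite lerDl.
Qed.

Lemma sym_bound (t : nat -> V * V) (psi : Y -> K) (Mp : K) p :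
  slin psi -> 0 <= Mp -> (forall y, `|psi y| <= Mp * `|y|) ->
  (forall x, X x -> psi x = 0) ->
  ptensor_symmetric N t -> ptensor_pi N mulU t p ->
  exists S, series_to nK (fun n => psi (L (t n).1 (D (t n).2))) S /\ `|S| <= Mp * M * N (p - one).
Proof.
move=> hl Mp0 hb h0 hsym hpi.
have Kb0 := Kb_gt0 Mp0; set Kb := Mp * C1 * M + 1 in Kb0.
have Kbn0 : Kb != 0 by rewrite gt_eqF.
have [s [hs1 hs2]] := hsym _ (Bf_ball hl Mp0 hb).
have h3 : series_to nK (fun n => psi (D (mulU (t n).1 (t n).2))) (Kb * (s + s)).
  apply: ser_ext (ser_scale Kb (ser_add hs2 hs1)) => n.
  rewrite D_mul (sD _ _ hl) (psi_comm _ _ hl h0) /Bf.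
  change (Kb * (psi (L (t n).2 (D (t n).1)) / Kb + psi (L (t n).1 (D (t n).2)) / Kb) = psi (L (t n).2 (D (t n).1)) + psi (L (t n).1 (D (t n).2))).
  field => //.
have h4 : series_to nK (fun n => psi (D (mulU (t n).1 (t n).2))) (psi (D p)).
  apply: (@ser_map _ _ N (fun u => psi (D u)) (Mp * M)) => //.
  - by move=> k x y; rewrite DL hl.
  - by apply: mulr_ge0.
  - move=> x; apply: (le_trans (hb _)); rewrite -mulrA ler_wpM2l //.
    exact: D_bound.
have e := ser_uniq h3 h4.
exists (Kb * s); split.
  apply: ser_ext (ser_scale Kb hs1) => n; rewrite /Bf -/Kb; field => //.
have : `|Kb * s| *+ 2 = `|psi (D p)| by rewrite -normrMn mulr2n -mulrDr e.
move=> h5; apply: (@le_trans _ _ `|psi (D p)|).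
  by rewrite -h5 mulr2n lerDl normr_ge0.
have -> : psi (D p) = psi (D (p - one)).
  by rewrite (linB DL) D_one subr0.
apply: (le_trans (hb _)); rewrite -mulrA ler_wpM2l //; exact: D_bound.
Qed.

Lemma norm4 (a b c e : K) : `|a + b - c - e| <= `|a| + `|b| + `|c| + `|e|.
Proof.
apply: (le_trans (ler_normB _ _)); rewrite lerD2r.
apply: (le_trans (ler_normB _ _)); rewrite lerD2r.
exact: ler_normD.
Qed.

Lemma phi_zero (phi : Y -> K) (Mf : K) c :
  slin phi -> 0 <= Mf -> (forall y, `|phi y| <= Mf * `|y|) ->
  (forall x, X x -> phi x = 0) ->
  sym_pseudo_amenable N mulU -> phi (d c) = 0.
Proof.
move=> hl Mf0 hb h0 [I [le [t [[_ _ _ hdir] hts happ]]]].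
pose uc : V := (c, 0).
pose w := d c.
have hD : D uc = w by [].
have C10 := C1_ge0.
have Nuc0 := N_ge0 uc.
have Kb0 := Kb_gt0 Mf0; set Kb := Mf * C1 * M + 1 in Kb0.
pose a1 := Mf * C1 * N uc.
have a10 : 0 <= a1 by rewrite /a1; do 2 apply: mulr_ge0 => //.
pose a2 := Mf * C1 * `|w|.
have a20 : 0 <= a2 by rewrite /a2; do 2 apply: mulr_ge0 => //.
pose Q := Kb + a1 * M + a1 * M + a2.
have Q0 : 0 <= Q.
  rewrite /Q; apply: addr_ge0 => //; apply: addr_ge0; last exact: mulr_ge0.
  by apply: addr_ge0; [exact: ltW | exact: mulr_ge0].
apply: (small0 Q0) => e e0.
have [i0 hi0] := happ uc e e0.
have [i1 hi1] := happ one e e0.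
have [k [k0 k1]] := hdir i0 i1.
have [hdist _] := hi0 k k0.
have [_ [p [hpi hp]]] := hi1 k k1.
rewrite mulU_one in hp.
have [_ hsym] := hts k.
set tk := t k in hdist hpi hsym.
have l1 : slin (fun y => phi (L uc y)) by move=> kk x y; rewrite LR hl.
have b1 : forall y, `|phi (L uc y)| <= a1 * `|y|.
  move=> y; apply: (le_trans (hb _)); rewrite /a1 -!mulrA ler_wpM2l //.
  by rewrite mulrA; apply: L_bound.
have z1 : forall x, X x -> phi (L uc x) = 0 by move=> x Xx; apply: h0; apply: XL.
have [S1 [hS1 bS1]] := sym_bound l1 a10 b1 z1 hsym hpi.
have l2 : slin (fun y => phi (Rr y uc)) by move=> kk x y; rewrite RrR hl.
have b2 : forall y, `|phi (Rr y uc)| <= a1 * `|y|.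
  move=> y; apply: (le_trans (hb _)); rewrite /a1 -!mulrA ler_wpM2l //.
  by rewrite mulrA; apply: Rr_bound.
have z2 : forall x, X x -> phi (Rr x uc) = 0 by move=> x Xx; apply: h0; apply: XRr.
have [S2 [hS2 bS2]] := sym_bound l2 a10 b2 z2 hsym hpi.
have [s1 [s2 [hs1 hs2 hs12]]] := hdist _ (Bf_ball hl Mf0 hb).
have Kbn0 : Kb != 0 by rewrite gt_eqF.
have e1 : Kb * s1 = S1.
  apply: ser_uniq (ser_scale Kb hs1) _.
  apply: ser_ext hS1 => n; rewrite /Bf /ptensor_lmul /= -/Kb L_mul.
  by field.
have h5 : series_to nK (fun n => phi (L (mulU (tk n).1 (tk n).2) w)) (phi (L p w)).
  apply: (@ser_map _ _ N (fun u => phi (L u w)) a2) => //.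
  - by move=> kk x y; rewrite LL hl.
  - move=> x; apply: (le_trans (hb _)); rewrite /a2 -!mulrA ler_wpM2l //.
    by rewrite (mulrC `|w|) mulrA; apply: L_bound.
have e2 : Kb * s2 = S2 + phi (L p w).
  apply: ser_uniq (ser_scale Kb hs2) _.
  apply: ser_ext (ser_add hS2 h5) => n; rewrite /Bf /ptensor_rmul /= -/Kb.
  rewrite D_mul (linD (LR _)) (sD _ _ hl) L_Rr L_mul hD.
  by field.
pose Z := phi (L (p - one) w).
have e3 : phi (L p w) = phi w + Z.
  rewrite /Z (linB (f := fun u => L u w) (LL w)) L_one (sB _ _ hl).
  by rewrite addrC subrK.
have E : phi w = Kb * (s2 - s1) + S1 - S2 - Z.
  rewrite mulrBr e1 e2 e3; ring.
rewrite -/w E; apply: (le_trans (norm4 _ _ _ _)).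
have t1 : `|Kb * (s2 - s1)| <= Kb * e.
  by rewrite normrM (gtr0_norm Kb0) ler_wpM2l ?(ltW Kb0) // distrC.
have t2 : `|S1| <= a1 * M * e.
  by apply: (le_trans bS1); apply: ler_wpM2l => //; apply: mulr_ge0.
have t3 : `|S2| <= a1 * M * e.
  by apply: (le_trans bS2); apply: ler_wpM2l => //; apply: mulr_ge0.
have t4 : `|Z| <= a2 * e.
  apply: (le_trans (hb _)); apply: (le_trans (ler_wpM2l Mf0 (L_bound _ _))).
  rewrite /a2 -!mulrA ler_wpM2l // ler_wpM2l // mulrC ler_wpM2l //.
have -> : Q * e = Kb * e + a1 * M * e + a1 * M * e + a2 * e by rewrite /Q; ring.
by do 3 (apply: lerD => //).
Qed.

End Main.

Unset Implicit Arguments. Set Strict Implicit. Set Printing Implicit Defensive.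

Theorem lemma6p3 (R : realType) (A : completeNormedModType R[i])
  (mul : A -> A -> A) (Y : completeNormedModType R[i])
  (la : A -> Y -> Y) (ra : Y -> A -> Y) (X : set Y)
  (d tau : A -> Y) :
  banach_algebra_mul mul ->
  sym_pseudo_amenable (@unitization_norm R A) (unitization_mul mul) ->
  banach_bimodule mul la ra ->
  closed_subbimodule la ra X ->
  is_derivation mul la ra d -> is_bounded d ->
  is_linear tau -> (forall a, centre_in la ra setT (tau a)) ->
  (forall a, X (d a + tau a)) ->
  (forall a, X (d a)) /\ (forall a, centre_in la ra X (tau a)).
Proof.
move=> [_ [_ [mulDr _]]] Ham [laL [laR [raL [raR [laM [_ [laRa [C [C0 Cb]]]]]]]]].
move=> [Xcl X0 Xsub Xla Xra] [dL dD] [M [M0 Mb]] _ tauc hX.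
have tauC : forall a b, la b (tau a) = ra (tau a) b.
  by move=> a b; have [_ h] := tauc a; exact: h b.
have dX : forall c, X (d c).
  move=> c; apply: contrapT => nX.
  have [phi [phil phib phi0 phin]] := separation Xcl X0 Xsub nX.
  have := @phi_zero R A mul Y la ra X d tau mulDr laL laR raR laM laRa C C0 Cb
    Xsub Xla Xra dL dD M M0 Mb tauC hX phi 1 c phil ler01.
  have phib1 : forall y, `|phi y| <= 1 * `|y| by move=> y; rewrite mul1r.
  move=> /(_ phib1 phi0 Ham) h.
  by move: phin; rewrite h eqxx.
split => // a.
have Xt : X (tau a).
  have -> : tau a = (d a + tau a) - d a by rewrite addrC addKr.
  by rewrite -scaleN1r addrC; apply: Xsub => //.
by split => // b; have [_ h] := tauc a; exact: h b.
Qed.
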